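(* For every integer $m\geq 3$, the complete sun $KS_m$ satisfies $\eta(KS_m)=\lceil (m+2)/3\rceil$.
   Context: All graphs are finite, simple and undirected. Indices are taken modulo $m$, so $u_0=u_m$ and $v_0=v_m$. The complete sun $KS_m$ has vertices $u_1,\dots,u_m,v_1,\dots,v_m$, where $\{u_1,\dots,u_m\}$ is a clique, and additional edges $(u_i,v_{i-1}),(u_i,v_i)$ for all $i\in[m]$ (so each $v_i$ is adjacent exactly to $u_i$ and $u_{i+1}$). For a vertex $v$, $N(v)$ is its set of neighbours. For a positive integer $k$, $[k]=\{1,\dots,k\}$. For a labeling $f:V(G)\to[k]$ and $S\subseteq V(G)$, $f(S)=\sum_{u\in S}f(u)$. A labeling $f:V(G)\to[k]$ is an additive $k$-coloring if $f(N(u))\neq f(N(v))$ for every edge $(u,v)$ of $G$. The additive chromatic number $\eta(G)$ is the least $k$ for which $G$ has an additive $k$-coloring. *)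

(* Defs.v *)
From mathcomp Require Import all_boot.
Set Implicit Arguments. Unset Strict Implicit. Unset Printing Implicit Defensive.

Definition simple_graph (T : finType) (e : rel T) : Prop :=
  symmetric e /\ irreflexive e.

Definition nbr_sum (T : finType) (e : rel T) (f : T -> nat) (u : T) : nat :=
  \sum_(w : T | e u w) f w.

Definition additive_coloring (T : finType) (e : rel T) (k : nat) (f : T -> nat) : Prop :=
  (forall x, 1 <= f x <= k) /\
  (forall u v, e u v -> nbr_sum e f u <> nbr_sum e f v).

Definition has_additive_coloring (T : finType) (e : rel T) (k : nat) : Prop :=
  exists f : T -> nat, additive_coloring e k f.

Definition additive_chromatic_number (T : finType) (e : rel T) (k : nat) : Prop :=
  has_additive_coloring e k /\ (forall k', has_additive_coloring e k' -> k <= k').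

(* Complete sun KS_m, 0-indexed: inl i = u_(i+1), inr i = v_(i+1).
   u's form a clique; v_i adjacent exactly to u_i and u_(i+1 mod m). *)
Definition KS_vertex (m : nat) := ('I_m + 'I_m)%type.

Definition KS_adj (m : nat) (x y : KS_vertex m) : bool :=
  match x, y with
  | inl i, inl j => i != j
  | inl i, inr j => (nat_of_ord i == nat_of_ord j) || (nat_of_ord i == (j.+1 %% m))
  | inr j, inl i => (nat_of_ord i == nat_of_ord j) || (nat_of_ord i == (j.+1 %% m))
  | inr _, inr _ => false
  end.

(* Main.v *)
Require Import Defs.
From mathcomp Require Import all_boot.
From mathcomp Require Import zify.
Set Implicit Arguments. Unset Strict Implicit. Unset Printing Implicit Defensive.

Lemma modS_small m x : x < m -> x.+1 %% m = (if x.+1 == m then 0 else x.+1).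
Proof.
move=> H; case: eqP => [->|/eqP ne]; first exact: modnn.
apply: modn_small; lia.
Qed.

Definition prevo n (i : 'I_n.+1) : 'I_n.+1 := inord (if i == 0 :> nat then n else i.-1).

Lemma prevoE n (i : 'I_n.+1) : nat_of_ord (prevo i) = (if i == 0 :> nat then n else i.-1).
Proof. rewrite /prevo inordK //; have := ltn_ord i; case: eqP => _; lia. Qed.

Lemma sum_two n (Hn : 1 <= n) (i : 'I_n.+1) (G : 'I_n.+1 -> nat) :
  \sum_(j < n.+1) (if (nat_of_ord i == nat_of_ord j) || (nat_of_ord i == j.+1 %% n.+1) then G j else 0)
  = G i + G (prevo i).
Proof.
have E : forall j : 'I_n.+1, (if (nat_of_ord i == nat_of_ord j) || (nat_of_ord i == j.+1 %% n.+1) then G j else 0)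
   = (if j == i then G j else 0) + (if j == prevo i then G j else 0).
  move=> j; have := ltn_ord i; have := ltn_ord j; have := prevoE i.
  rewrite modS_small //.
  have -> : (j == i) = (nat_of_ord i == nat_of_ord j) by rewrite eq_sym.
  have -> : (j == prevo i) = (nat_of_ord j == nat_of_ord (prevo i)) by [].
  move=> P Hj Hi.
  case: (nat_of_ord i =P nat_of_ord j) => Hij; case: (nat_of_ord j =P nat_of_ord (prevo i)) => Hjp;
   case: (nat_of_ord i =P (if j.+1 == n.+1 then 0 else j.+1)) => Hq /=; try lia;
   move: Hq Hjp; rewrite P; case: eqP; case: eqP => /=; lia.
rewrite (eq_bigr _ (fun j _ => E j)) big_split /=.
by rewrite -!big_mkcond /= !big_pred1_eq.
Qed.

Lemma sum_pair n (p q : 'I_n) (G : 'I_n -> nat) : p != q ->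
  \sum_(j < n) (if (j == p) || (j == q) then G j else 0) = G p + G q.
Proof.
move=> pq.
have E : forall j : 'I_n, (if (j == p) || (j == q) then G j else 0)
   = (if j == p then G j else 0) + (if j == q then G j else 0).
  move=> j; case: (j =P p) => Hp; case: (j =P q) => Hq //=; last by rewrite addn0.
  by move: pq; rewrite -Hp -Hq eqxx.
rewrite (eq_bigr _ (fun j _ => E j)) big_split /=.
by rewrite -!big_mkcond /= !big_pred1_eq.
Qed.

Definition nexto n (j : 'I_n.+1) : 'I_n.+1 := inord (j.+1 %% n.+1).

Lemma nextoE n (j : 'I_n.+1) : nat_of_ord (nexto j) = j.+1 %% n.+1.
Proof. rewrite /nexto inordK //; lia. Qed.

Lemma nbr_u n (Hn : 1 <= n) (F : KS_vertex n.+1 -> nat) (i : 'I_n.+1) :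
  nbr_sum (@KS_adj n.+1) F (inl i) + F (inl i)
  = \sum_(j < n.+1) F (inl j) + (F (inr i) + F (inr (prevo i))).
Proof.
rewrite /nbr_sum big_sumType /=.
rewrite [in RHS](bigD1 i) //= -(sum_two Hn i (fun j => F (inr j))) -big_mkcond /=.
rewrite (eq_bigl (fun j => j != i)); last by move=> j; rewrite eq_sym.
by rewrite addnC addnA.
Qed.

Lemma nbr_v n (Hn : 1 <= n) (F : KS_vertex n.+1 -> nat) (j : 'I_n.+1) :
  nbr_sum (@KS_adj n.+1) F (inr j) = F (inl j) + F (inl (nexto j)).
Proof.
rewrite /nbr_sum big_sumType /= big_pred0_eq addn0.
have pq : j != nexto j.
  apply/eqP => /(congr1 val) /=; rewrite nextoE modS_small ?ltn_ord //.
  have := ltn_ord j; case: eqP; lia.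
rewrite big_mkcond /= -(@sum_pair _ j (nexto j) (fun i => F (inl i))) //.
apply: eq_bigr => i _; congr (if _ then _ else _).
by rewrite -nextoE.
Qed.

Lemma lower n (Hn : 1 <= n) k f : additive_coloring (@KS_adj n.+1) k f -> n.+1 <= (3*k - 3).+1 /\ 1 <= k.
Proof.
move=> [Hr Hd].
have Hk : 1 <= k by have := Hr (inl ord0); lia.
split=> //.
set S := \sum_(j < n.+1) f (inl j).
pose X (i : 'I_n.+1) := nbr_sum (@KS_adj n.+1) f (inl i) + k.
have HX : forall i, S + 2 <= X i <= S + 3*k - 1.
  move=> i; have := nbr_u Hn f i; rewrite -/S /X.
  have := Hr (inl i); have := Hr (inr i); have := Hr (inr (prevo i)); set a := f (inl i); set b := f (inr i); set c := f (inr (prevo i)); clearbody S; lia.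
have Xinj : injective X.
  move=> i j; rewrite /X => /addIn E; apply/eqP; apply/negPn/negP => ne.
  by apply: (Hd (inl i) (inl j)) => //=.
pose h (i : 'I_n.+1) : 'I_(3*k-3).+1 := inord (X i - (S+2)).
have hinj : injective h.
  move=> i j /(congr1 val); rewrite /h /= !inordK; last 2 first.
  - have := HX j; lia.
  - have := HX i; lia.
  move=> E; apply: Xinj; have := HX i; have := HX j; lia.
have := leq_card h hinj; rewrite !card_ord; done.
Qed.

Lemma sum_lb n (A : nat -> nat) : (forall j, 1 <= A j) ->
  n.+3 + (A 1 - 1) + (A 2 - 1) <= \sum_(j < n.+3) A j.
Proof.
move=> H; rewrite !big_ord_recl /=.
set R := \sum_(i < n) _.
have : n <= R.
  rewrite /R -{1}(card_ord n) -sum1_card; apply: leq_sum => i _; exact: H.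
have := H 0; have := H 1; have := H 2; rewrite /bump /= !addn0 add1n; lia.
Qed.

Lemma upper n (Hn : 2 <= n) : has_additive_coloring (@KS_adj n.+1) ((n.+1 + 4) %/ 3).
Proof.
have Hn' : 1 <= n by lia.
set k := (n.+1 + 4) %/ 3.
have Hk : 2 <= k by rewrite /k; lia.
have Hkm : n.+1 <= 3 * k - 2 by rewrite /k; lia.
have Hkm2 : 3 * k - 4 <= n.+1 by rewrite /k; lia.
pose B := (n.+1 + 3 - k) %/ 2.
have HB1 : B <= k by rewrite /B; lia.
have HB2 : 1 <= B by rewrite /B; lia.
have HBB : B = maxn 1 ((n + 4 - k) %/ 2) by rewrite /B; lia.
pose t := B + k - 1.
have Et : t + 1 = B + k by rewrite /t; lia.
have Ht3 : 3 <= t by rewrite /t /B; lia.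
clearbody t B k.
pose A := fun j : nat => if j == 0 then 1 else if j < t then maxn 2 (k.+1 - j) else 1.
pose Bf := fun j : nat => maxn 1 ((j + 4 - k) %/ 2).
pose h := fun i : nat => if i == 0 then B + k else if i < t then i.+1 else i.+2.
pose f := fun x : KS_vertex n.+1 => match x with inl i => A (nat_of_ord i) | inr j => Bf (nat_of_ord j) end.
have HA : forall j, 1 <= A j <= k.
  move=> j; rewrite /A; case: eqP => Hj0; first lia; case: (ltnP j t) => _; lia.
have HBf : forall j, j < n.+1 -> 1 <= Bf j <= k.
  move=> j Hj; rewrite /Bf; lia.
have Hid : forall i : 'I_n.+1, Bf i + Bf (prevo i) + k = A i + h i.
  move=> i; rewrite prevoE; have := ltn_ord i; move: (nat_of_ord i) => x Hx.
  rewrite /A /h /Bf; case: eqP => [->|nz]; first by rewrite -HBB; lia.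
  case: (ltnP x t) => Hxt; lia.
have hinj : forall i j, i < n.+1 -> j < n.+1 -> i != j -> h i != h j.
  move=> i j Hi Hj /eqP ne; rewrite /h.
  case: (i =P 0) => Ei; case: (j =P 0) => Ej; case: (ltnP i t) => Hit; case: (ltnP j t) => Hjt; apply/eqP; lia.
set S := \sum_(j < n.+1) A j.
have HS : 3 * k - 1 <= S.
  have HA1 : forall j, 1 <= A j by move=> j; have := HA j; lia.
  have := sum_lb (n-2) HA1; have -> : (n-2).+3 = n.+1 by lia.
  rewrite -/S.
  have HA1k : A 1 = k.
    rewrite /A /=; have -> : 1 < t by lia.
    lia.
  have HA2 : 2 <= A 2.
    rewrite /A /=; have -> : 2 < t by lia.
    lia.
  lia.
exists f; split.
  by move=> [i|j] /=; [exact: HA | exact: HBf (ltn_ord j)].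
have Nu : forall i : 'I_n.+1, nbr_sum (@KS_adj n.+1) f (inl i) + k = S + h i.
  move=> i; have E := nbr_u Hn' f i.
  change (nbr_sum (@KS_adj n.+1) f (inl i) + A i = S + (Bf i + Bf (prevo i))) in E.
  have := Hid i; lia.
have Nv : forall j : 'I_n.+1, nbr_sum (@KS_adj n.+1) f (inr j) <= 2 * k.
  move=> j; rewrite (nbr_v Hn' f j) /=; have := HA j; have := HA (nexto j); lia.
have hge : forall i : nat, 2 <= h i.
  move=> i; rewrite /h; case: (i =P 0) => Ei; first lia; case: (ltnP i t) => _; lia.
move=> [i|j] [i'|j'] //= adj.
- have := hinj i i' (ltn_ord i) (ltn_ord i') adj => /eqP hne.
  have := Nu i; have := Nu i'.
  set x := nbr_sum _ f (inl i); set y := nbr_sum _ f (inl i'); lia.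
- have := Nu i; have := Nv j'; have := hge i.
  set x := nbr_sum _ f (inl i); set y := nbr_sum _ f (inr j'); lia.
- have := Nu i'; have := Nv j; have := hge i'.
  set x := nbr_sum _ f (inl i'); set y := nbr_sum _ f (inr j); lia.
Qed.

Theorem mainTheorem14 (m : nat) : 3 <= m ->
  additive_chromatic_number (@KS_adj m) ((m + 4) %/ 3).
Proof.
case: m => [|n] // Hm.
have Hn : 1 <= n by lia.
split; first by apply: upper; lia.
move=> k' [f Hf]; have [H1 H2] := lower Hn Hf; lia.
Qed.
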